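(* Let $F$ be the elementary cellular automaton with rule number 28. For every nonempty finite word $u\in\{0,1\}^*$, the deterministic communication complexity of $\textsc{SInv}_{F,u}$ restricted to inputs of length $n$ is bounded by a constant independent of $n$.
   Context: An elementary cellular automaton (ECA) with rule number $N\in\{0,\dots,255\}$ is the map $F:\{0,1\}^{\mathbb Z}\to\{0,1\}^{\mathbb Z}$ given by $F(x)_i=f(x_{i-1},x_i,x_{i+1})$. Here the local rule $f:\{0,1\}^3\to\{0,1\}$ is determined by $N=\sum_{a,b,c\in\{0,1\}}2^{4a+2b+c}f(a,b,c)$. For a nonempty finite word $u$, $p_u\in\{0,1\}^{\mathbb Z}$ is defined by $(p_u)_i=u_{i\bmod |u|}$. For a finite word $x$, $p_u[x]$ is the configuration equal to $x$ on positions $0,\dots,|x|-1$ and to $p_u$ elsewhere. $\textsc{SInv}_{F,u}$ is the decision problem: on input a finite word $x$, decide whether there is an integer $w$ such that for all $t\ge0$ the set of positions where $F^t(p_u)$ and $F^t(p_u[x])$ differ is contained in an interval of length $w$. For each $n$, it is regarded as a function $\{0,1\}^n\to\{0,1\}$. For a function $g:X\times Y\to Z$, $D(g)$ is the minimal depth of a deterministic two-party protocol computing $g$. In such a protocol, Alice knows $x$ and Bob knows $y$. The protocol is a binary tree: each internal node is labelled by a function of Alice's input only or of Bob's input only, with values in $\{\text{left},\text{right}\}$, and each leaf is labelled by an output value. For $g:\{0,1\}^m\to Z$, set $D(g)=\max_{0\le i<m}D(g_i)$, where $g_i:\{0,1\}^i\times\{0,1\}^{m-i}\to Z$ is $g_i(x,y)=g(xy)$.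 *)

(* Defs.v *)
From Stdlib Require Import ZArith List Bool.
Import ListNotations.
Open Scope Z_scope.

Definition config := Z -> bool.

Definition local_rule (N : nat) (a b c : bool) : bool :=
  Z.testbit (Z.of_nat N) (4 * Z.b2z a + 2 * Z.b2z b + Z.b2z c).

Definition eca (N : nat) (x : config) : config :=
  fun i => local_rule N (x (i - 1)) (x i) (x (i + 1)).

Definition iterF (F : config -> config) (t : nat) (c : config) : config :=
  Nat.iter t F c.

Definition periodic (u : list bool) : config :=
  fun i => nth (Z.to_nat (i mod Z.of_nat (length u))) u false.

Definition patch (u x : list bool) : config :=
  fun i => if (0 <=? i) && (i <? Z.of_nat (length x))
           then nth (Z.to_nat i) x false else periodic u i.

Definition SInv (F : config -> config) (u : list bool) (x : list bool) : Prop :=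
  exists w : Z, forall t : nat, exists a : Z, forall i : Z,
    iterF F t (periodic u) i <> iterF F t (patch u x) i -> a <= i < a + w.

Inductive protocol (X Y R : Type) : Type :=
| Leaf : R -> protocol X Y R
| NodeA : (X -> bool) -> protocol X Y R -> protocol X Y R -> protocol X Y R
| NodeB : (Y -> bool) -> protocol X Y R -> protocol X Y R -> protocol X Y R.
Arguments Leaf {X Y R}.
Arguments NodeA {X Y R}.
Arguments NodeB {X Y R}.

Fixpoint run {X Y R} (P : protocol X Y R) (x : X) (y : Y) : R :=
  match P with
  | Leaf r => r
  | NodeA f l r => if f x then run l x y else run r x y
  | NodeB g l r => if g y then run l x y else run r x y
  end.

Fixpoint depth {X Y R} (P : protocol X Y R) : nat :=
  match P with
  | Leaf _ => 0
  | NodeA _ l r => S (Nat.max (depth l) (depth r))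
  | NodeB _ l r => S (Nat.max (depth l) (depth r))
  end.

(* D(g_i) <= d, where g_i : {0,1}^i x {0,1}^(m-i) -> {0,1}, g_i(x,y) = g(xy),
   for a decision problem g (a Prop on words, output true iff g holds). *)
Definition split_cc_le (g : list bool -> Prop) (m i d : nat) : Prop :=
  exists P : protocol (list bool) (list bool) bool,
    (depth P <= d)%nat /\
    forall x y : list bool, length x = i -> length y = (m - i)%nat ->
      (run P x y = true <-> g (x ++ y)).

(* D(g restricted to {0,1}^m) <= d, i.e. max_{0<=i<m} D(g_i) <= d. *)
Definition cc_le (g : list bool -> Prop) (m d : nat) : Prop :=
  forall i : nat, (i < m)%nat -> split_cc_le g m i d.

(* Main.v *)
Require Import Defs.
From Stdlib Require Import ZArith List.
From Stdlib Require Import Bool Lia Classical FunctionalExtensionality Wf_nat.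
Import ListNotations.
Open Scope Z_scope.

Lemma f28 : forall a b c, local_rule 28 a b c = if a then negb b && negb c else b.
Proof. intros [|] [|] [|]; reflexivity. Qed.

Lemma eca28 : forall c i, eca 28 c i = if c (i-1) then negb (c i) && negb (c (i+1)) else c i.
Proof. intros. unfold eca. apply f28. Qed.

Lemma iterS : forall F t c, iterF F (S t) c = F (iterF F t c).
Proof. reflexivity. Qed.

Lemma wall_stable : forall c p, c p = false -> c (p+1) = true ->
  eca 28 c p = false /\ eca 28 c (p+1) = true.
Proof.
  intros c p H0 H1. rewrite !eca28. replace (p+1-1) with p by lia.
  rewrite H0, H1. destruct (c (p-1)); simpl; auto.
Qed.

Lemma right_loc : forall c c' p, c p = false -> c (p+1) = true ->
  (forall i, p <= i -> c i = c' i) -> forall i, p <= i -> eca 28 c i = eca 28 c' i.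
Proof.
  intros c c' p H0 H1 Hag i Hi.
  destruct (Z.eq_dec i p) as [->|Hne].
  - assert (H0' : c' p = false) by (rewrite <- Hag by lia; auto).
    assert (H1' : c' (p+1) = true) by (rewrite <- Hag by lia; auto).
    rewrite !eca28. rewrite H0, H1, H0', H1'.
    destruct (c (p-1)), (c' (p-1)); reflexivity.
  - unfold eca. rewrite (Hag (i-1)), (Hag i), (Hag (i+1)) by lia. reflexivity.
Qed.

Lemma left_loc : forall c c' p, c p = false -> c (p+1) = true ->
  (forall i, i <= p+1 -> c i = c' i) -> forall i, i <= p+1 -> eca 28 c i = eca 28 c' i.
Proof.
  intros c c' p H0 H1 Hag i Hi.
  destruct (Z.eq_dec i (p+1)) as [->|Hne].
  - assert (H0' : c' p = false) by (rewrite <- Hag by lia; auto).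
    assert (H1' : c' (p+1) = true) by (rewrite <- Hag by lia; auto).
    rewrite !eca28. replace (p+1-1) with p by lia. rewrite H0, H1, H0', H1'.
    reflexivity.
  - unfold eca. rewrite (Hag (i-1)), (Hag i), (Hag (i+1)) by lia. reflexivity.
Qed.

Lemma transition : forall (c : Z -> bool) b i0 (k : nat), c i0 = b ->
  c (i0 + Z.of_nat k) = negb b ->
  exists p, i0 <= p < i0 + Z.of_nat k /\ c p = b /\ c (p+1) = negb b.
Proof.
  intros c b i0 k. induction k as [|k IH]; intros H0 H1.
  - simpl in H1. rewrite Z.add_0_r, H0 in H1. destruct b; discriminate.
  - destruct (Bool.bool_dec (c (i0 + Z.of_nat k)) b) as [E|E].
    + exists (i0 + Z.of_nat k). split; [lia|]. split; auto.
      rewrite <- H1. f_equal. lia.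
    + assert (H : c (i0 + Z.of_nat k) = negb b)
        by (destruct b, (c (i0 + Z.of_nat k)); simpl in *; congruence).
      destruct (IH H0 H) as [p [Hp1 Hp2]]. exists p. split; [lia|auto].
Qed.

Lemma transitionZ : forall c b i0 i1, i0 <= i1 -> c i0 = b -> c i1 = negb b ->
  exists p, i0 <= p < i1 /\ c p = b /\ c (p+1) = negb b.
Proof.
  intros c b i0 i1 Hle H0 H1.
  destruct (transition c b i0 (Z.to_nat (i1 - i0))) as [p Hp]; auto.
  - rewrite Z2Nat.id by lia. replace (i0 + (i1-i0)) with i1 by lia. auto.
  - rewrite Z2Nat.id in Hp by lia. exists p.
    destruct Hp as [? [? ?]]. repeat split; auto; lia.
Qed.

Lemma periodic_shift : forall u i k,
  periodic u (i + k * Z.of_nat (length u)) = periodic u i.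
Proof. intros. unfold periodic. rewrite Z_mod_plus_full. reflexivity. Qed.

Lemma periodic_nth : forall u j, (j < length u)%nat ->
  periodic u (Z.of_nat j) = nth j u false.
Proof.
  intros. unfold periodic. rewrite Z.mod_small by lia. rewrite Nat2Z.id. reflexivity.
Qed.

Lemma patch_out : forall u z i, (i < 0 \/ Z.of_nat (length z) <= i) ->
  patch u z i = periodic u i.
Proof.
  intros u z i H. unfold patch.
  destruct (0 <=? i) eqn:E1, (i <? Z.of_nat (length z)) eqn:E2; simpl; auto.
  apply Z.leb_le in E1; apply Z.ltb_lt in E2; lia.
Qed.

Lemma sinv_wall : forall u z p, u <> nil ->
  (forall k, periodic u (p + k * Z.of_nat (length u)) = false /\
             periodic u (p + k * Z.of_nat (length u) + 1) = true) ->
  SInv (eca 28) u z.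
Proof.
  intros u z p Hu Hw.
  assert (HL : 1 <= Z.of_nat (length u)) by (destruct u; [congruence| simpl; lia]).
  destruct (Hw (-(Z.abs p + 2))) as [WL0 WL1].
  destruct (Hw (Z.abs p + Z.of_nat (length z) + 1)) as [WR0 WR1].
  set (L := Z.of_nat (length u)) in *.
  set (n := Z.of_nat (length z)) in *.
  set (pL := p + - (Z.abs p + 2) * L) in *.
  set (pR := p + (Z.abs p + n + 1) * L) in *.
  assert (Hab : - Z.abs p <= p <= Z.abs p) by lia.
  assert (HpL : pL + 1 < 0).
  { unfold pL. assert ((Z.abs p + 2) * L >= Z.abs p + 2) by nia. lia. }
  assert (HpR : n <= pR).
  { unfold pR. assert ((Z.abs p + n + 1) * L >= Z.abs p + n + 1) by (unfold n; nia). lia. }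
  assert (Inv : forall t,
     iterF (eca 28) t (periodic u) pL = false /\
     iterF (eca 28) t (periodic u) (pL+1) = true /\
     iterF (eca 28) t (periodic u) pR = false /\
     iterF (eca 28) t (periodic u) (pR+1) = true /\
     (forall i, i <= pL+1 -> iterF (eca 28) t (periodic u) i = iterF (eca 28) t (patch u z) i) /\
     (forall i, pR <= i -> iterF (eca 28) t (periodic u) i = iterF (eca 28) t (patch u z) i)).
  { induction t as [|t IH].
    - simpl. repeat split; auto.
      + intros i Hi. rewrite patch_out by lia. reflexivity.
      + intros i Hi. rewrite patch_out by lia. reflexivity.
    - destruct IH as [A1 [A2 [A3 [A4 [A5 A6]]]]].
      rewrite !iterS.
      destruct (wall_stable _ _ A1 A2) as [B1 B2].
      destruct (wall_stable _ _ A3 A4) as [B3 B4].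
      repeat split; auto.
      + apply left_loc; auto.
      + apply right_loc; auto. }
  exists (pR - pL + 2). intros t. exists pL. intros i Hi.
  destruct (Inv t) as [_ [_ [_ [_ [A5 A6]]]]].
  destruct (Z_le_gt_dec i (pL+1)) as [H|H]; [exfalso; apply Hi; auto|].
  destruct (Z_le_gt_dec pR i) as [H'|H']; [exfalso; apply Hi; auto|].
  lia.
Qed.

Lemma eca_const : forall c b, (forall i, c i = b) -> forall i, eca 28 c i = false.
Proof. intros c b H i. rewrite eca28, !H. destruct b; reflexivity. Qed.

Lemma iter_const : forall c b, (forall i, c i = b) ->
  forall t i, iterF (eca 28) (S t) c i = false.
Proof.
  intros c b H t. induction t as [|t IH]; intros i.
  - rewrite iterS. simpl. apply (eca_const c b H).
  - rewrite iterS. apply (eca_const _ false IH).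
Qed.

Lemma rightmost_aux : forall (k : nat) (c : Z -> bool) q N, Z.to_nat (N - q) = k ->
  c q = true -> (forall i, i > N -> c i = false) ->
  exists r, c r = true /\ forall i, i > r -> c i = false.
Proof.
  intros k. induction k as [k IH] using (well_founded_induction lt_wf).
  intros c q N Hk Hq HN.
  destruct (classic (forall i, i > q -> c i = false)) as [Hall|Hn].
  - exists q; auto.
  - apply not_all_ex_not in Hn. destruct Hn as [i Hi].
    assert (Hgt : i > q) by (destruct (Z_gt_dec i q); auto; exfalso; apply Hi; intro; lia).
    assert (Hci : c i = true) by (destruct (c i) eqn:E; auto; exfalso; apply Hi; auto).
    assert (HiN : i <= N) by (destruct (Z_le_gt_dec i N); auto; rewrite HN in Hci; [discriminate|lia]).
    assert (HqN : q <= N) by lia.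
    apply (IH (Z.to_nat (N - i))) with (q := i) (N := N); auto. lia.
Qed.

Lemma rightmost : forall (c : Z -> bool) q N,
  c q = true -> (forall i, i > N -> c i = false) ->
  exists r, c r = true /\ forall i, i > r -> c i = false.
Proof. intros. eapply rightmost_aux; eauto. Qed.

Lemma right_step : forall c r, c r = true -> (forall i, i > r -> c i = false) ->
  eca 28 c (r+1) = true /\ forall i, i > r+1 -> eca 28 c i = false.
Proof.
  intros c r H1 H2. split.
  - rewrite eca28. replace (r+1-1) with r by lia. rewrite H1, !H2 by lia. reflexivity.
  - intros i Hi. rewrite eca28, !H2 by lia. reflexivity.
Qed.

Lemma forallb_false_ex : forall (f : bool -> bool) z, forallb f z = false ->
  exists j, (j < length z)%nat /\ f (nth j z false) = false.
Proof.
  intros f z. induction z as [|a z IH]; simpl; intros H; [discriminate|].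
  destruct (f a) eqn:E; simpl in H.
  - destruct (IH H) as [j [Hj Hf]]. exists (S j). simpl. split; [lia|auto].
  - exists O. simpl. split; [lia|auto].
Qed.

Lemma const_iff : forall u b, u <> nil -> (forall i, periodic u i = b) ->
  forall z, SInv (eca 28) u z <-> forallb (Bool.eqb b) z = true.
Proof.
  intros u b Hu Hb z. split.
  - intros HS. destruct (forallb (Bool.eqb b) z) eqn:Ez; auto. exfalso.
    destruct (forallb_false_ex _ _ Ez) as [j [Hj Hf]].
    assert (Hx : nth j z false = negb b) by (destruct b, (nth j z false); simpl in *; congruence).
    set (c0 := patch u z).
    assert (Hc0j : c0 (Z.of_nat j) = negb b).
    { unfold c0, patch. destruct (0 <=? Z.of_nat j) eqn:E1, (Z.of_nat j <? Z.of_nat (length z)) eqn:E2;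
      simpl; try (apply Z.leb_gt in E1; lia); try (apply Z.ltb_ge in E2; lia).
      rewrite Nat2Z.id. auto. }
    assert (Hout : forall i, (i < 0 \/ Z.of_nat (length z) <= i) -> c0 i = b).
    { intros. unfold c0. rewrite patch_out; auto. }
    set (c1 := eca 28 c0).
    assert (Hout1 : forall i, (i <= -2 \/ Z.of_nat (length z) + 1 <= i) -> c1 i = false).
    { intros i Hi. unfold c1. rewrite eca28, !Hout by lia. destruct b; reflexivity. }
    assert (Hq : exists q, c1 q = true).
    { destruct b.
      - destruct (transitionZ c0 true (-1) (Z.of_nat j)) as [p0 [Hp [E1 E2]]]; auto; try lia.
        apply Hout; lia.
        destruct (c0 (p0+2)) eqn:E3.
        + exists (p0+2). unfold c1. rewrite eca28. replace (p0+2-1) with (p0+1) by lia.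
          rewrite E2, E3. reflexivity.
        + exists (p0+1). unfold c1. rewrite eca28. replace (p0+1-1) with p0 by lia.
          replace (p0+1+1) with (p0+2) by lia. rewrite E1, E2, E3. reflexivity.
      - destruct (transitionZ c0 false (-1) (Z.of_nat j)) as [p0 [Hp [E1 E2]]]; auto; try lia.
        apply Hout; lia.
        exists (p0+1). unfold c1. rewrite eca28. replace (p0+1-1) with p0 by lia.
        rewrite E1, E2. reflexivity. }
    destruct Hq as [q Hq].
    assert (Hq2 : -2 <= q).
    { destruct (Z_le_gt_dec (-2) q); auto. rewrite Hout1 in Hq by lia. discriminate. }
    destruct (transitionZ c1 false (-2) q) as [p [_ [W0 W1]]]; auto;
      [apply Hout1; lia|].
    destruct (rightmost c1 q (Z.of_nat (length z) + 1)) as [r [R1 R2]]; auto.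
    { intros. apply Hout1. lia. }
    assert (Inv : forall s : nat,
      iterF (eca 28) (S s) c0 p = false /\ iterF (eca 28) (S s) c0 (p+1) = true /\
      iterF (eca 28) (S s) c0 (r + Z.of_nat s) = true /\
      forall i, i > r + Z.of_nat s -> iterF (eca 28) (S s) c0 i = false).
    { induction s as [|s IH].
      - simpl. fold c1. rewrite Z.add_0_r. auto.
      - destruct IH as [A1 [A2 [A3 A4]]].
        rewrite iterS.
        destruct (wall_stable _ _ A1 A2) as [B1 B2].
        destruct (right_step _ _ A3 A4) as [B3 B4].
        repeat split; auto.
        + replace (r + Z.of_nat (S s)) with (r + Z.of_nat s + 1) by lia. auto.
        + intros i Hi. apply B4. lia. }
    destruct HS as [w Hw].
    set (s := Z.to_nat (w + p - r + 2)).
    destruct (Hw (S s)) as [a Ha].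
    destruct (Inv s) as [_ [A2 [A3 _]]].
    assert (Hbg : forall i, iterF (eca 28) (S s) (periodic u) i = false)
      by (intros; apply (iter_const _ b Hb)).
    assert (H1 : a <= p+1 < a + w).
    { apply Ha. rewrite Hbg. fold c0. rewrite A2. discriminate. }
    assert (H2 : a <= r + Z.of_nat s < a + w).
    { apply Ha. rewrite Hbg. fold c0. rewrite A3. discriminate. }
    unfold s in H2. lia.
  - intros Hz.
    assert (E : patch u z = periodic u).
    { apply functional_extensionality. intros i. rewrite Hb. unfold patch.
      destruct ((0 <=? i) && (i <? Z.of_nat (length z))) eqn:E; auto.
      apply andb_true_iff in E. destruct E as [E1 E2].
      apply Z.leb_le in E1. apply Z.ltb_lt in E2.
      rewrite forallb_forall in Hz.
      assert (Hin : In (nth (Z.to_nat i) z false) z) by (apply nth_In; lia).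
      specialize (Hz _ Hin). apply Bool.eqb_prop in Hz. auto. }
    unfold SInv. rewrite E. exists 0. intros t. exists 0. intros i Hi. exfalso. apply Hi. reflexivity.
Qed.

Theorem mainTheorem6 :
  forall u : list bool, u <> nil ->
  exists C : nat, forall n : nat, cc_le (SInv (eca 28) u) n C.
Proof.
  intros u Hu. exists 2%nat. intros n i Hi.
  destruct (forallb (Bool.eqb (hd false u)) u) eqn:Hc.
  - set (b := hd false u) in *.
    assert (Hb : forall i, periodic u i = b).
    { intros j. unfold periodic. rewrite forallb_forall in Hc.
      assert (HL : 0 < Z.of_nat (length u)) by (destruct u; [congruence|simpl; lia]).
      assert (Hin : In (nth (Z.to_nat (j mod Z.of_nat (length u))) u false) u).
      { apply nth_In. pose proof (Z.mod_pos_bound j (Z.of_nat (length u)) HL). lia. }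
      specialize (Hc _ Hin). apply Bool.eqb_prop in Hc. auto. }
    exists (NodeA (fun x => forallb (Bool.eqb b) x)
             (NodeB (fun y => forallb (Bool.eqb b) y) (Leaf true) (Leaf false)) (Leaf false)).
    split; [simpl; lia|].
    intros x y _ _. rewrite (const_iff u b Hu Hb). simpl. rewrite forallb_app.
    destruct (forallb (Bool.eqb b) x), (forallb (Bool.eqb b) y); simpl; split; auto.
  - exists (Leaf true). split; [simpl; lia|]. intros x y _ _. simpl.
    split; [intros _|reflexivity].
    destruct (forallb_false_ex _ _ Hc) as [j [Hj Hf]].
    assert (H0 : nth 0 u false = hd false u) by (destruct u; reflexivity).
    assert (HL : 1 <= Z.of_nat (length u)) by (destruct u; [congruence|simpl; lia]).
    assert (Hex : exists p, periodic u p = false /\ periodic u (p+1) = true).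
    { destruct (hd false u) eqn:Eh.
      - assert (Ej : nth j u false = false) by (destruct (nth j u false); simpl in *; congruence).
        destruct (transitionZ (periodic u) false (Z.of_nat j) (0 + 1 * Z.of_nat (length u)))
          as [p [_ [P0 P1]]]; try lia.
        + rewrite periodic_nth; auto.
        + rewrite periodic_shift. pose proof (periodic_nth u 0 ltac:(lia)) as PP; simpl in PP; rewrite PP. simpl. rewrite H0. auto.
        + exists p; auto.
      - assert (Ej : nth j u false = true) by (destruct (nth j u false); simpl in *; congruence).
        destruct (transitionZ (periodic u) false 0 (Z.of_nat j)) as [p [_ [P0 P1]]]; try lia.
        + pose proof (periodic_nth u 0 ltac:(lia)) as PP; simpl in PP; rewrite PP. rewrite H0. auto.
        + rewrite periodic_nth; auto.
        + exists p; auto. }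
    destruct Hex as [p [P0 P1]].
    apply (sinv_wall u (x ++ y) p Hu).
    intros k. rewrite periodic_shift. split; auto.
    replace (p + k * Z.of_nat (length u) + 1) with ((p+1) + k * Z.of_nat (length u)) by lia.
    rewrite periodic_shift. auto.
Qed.
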